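(* Let $S\subset\mathbb{R}^n_+$ be compact and convex with $0\in S$. Let $a\in\mathbb{C}^n\setminus\mathbb{C}^{*n}$, $a\neq0$, let $J=\{j_1<\dots<j_\ell\}\subset\{1,\dots,n\}$ be the set of indices $j$ with $a_j\neq0$, and let $S_J\subseteq\mathbb{R}^\ell$ be the set of all $t\in\mathbb{R}^\ell$ such that the point $s\in\mathbb{R}^n_+$ defined by $s_{j_k}=t_k$ ($k=1,\dots,\ell$) and $s_j=0$ for $j\notin J$ belongs to $S$. Then $$H_S(a)=H_{S_J}(a_{j_1},\dots,a_{j_\ell}).$$
   Context: $\mathbb{R}_+=[0,\infty)$, $\mathbb{C}^{*n}=(\mathbb{C}\setminus\{0\})^n$. For a compact set $T\subset\mathbb{R}^k_+$ with $0\in T$, $\varphi_T(\xi)=\max_{t\in T}\langle t,\xi\rangle$ and the logarithmic supporting function $H_T\colon\mathbb{C}^k\to\mathbb{R}_+$ is $H_T(z)=\varphi_T(\log|z_1|,\dots,\log|z_k|)$ for $z\in\mathbb{C}^{*k}$ and $H_T(z)=\limsup_{\mathbb{C}^{*k}\ni w\to z}H_T(w)$ for $z\in\mathbb{C}^k\setminus\mathbb{C}^{*k}$. *)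

(* Defs.v *)
From HB Require Import structures.
From mathcomp Require Import all_boot all_order all_algebra.
From mathcomp Require Import all_classical all_reals all_analysis.
From mathcomp Require Import complex.
Set Implicit Arguments. Unset Strict Implicit. Unset Printing Implicit Defensive.
Import Order.TTheory GRing.Theory Num.Theory.
Import numFieldNormedType.Exports.
Local Open Scope classical_set_scope.
Local Open Scope ring_scope.

Section Defs.
Variable R : realType.

Definition cabs (z : R[i]) : R := Normc.normc z.

Definition Cstar (k : nat) (z : 'I_k -> R[i]) : Prop := forall j, z j != 0.

(* phi_T(xi) = max_{t in T} <t, xi>  (a sup, attained for compact nonempty T) *)
Definition phiT (k : nat) (T : set 'rV[R]_k) (xi : 'I_k -> R) : \bar R :=
  ereal_sup [set (\sum_(i < k) t ord0 i * xi i)%:E | t in T].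

Definition HTstar (k : nat) (T : set 'rV[R]_k) (z : 'I_k -> R[i]) : \bar R :=
  phiT T (fun j => ln (cabs (z j))).

(* H_T on C^k: on C^{*k} as above, elsewhere the limsup over w in C^{*k}, w -> z *)
Definition HT (k : nat) (T : set 'rV[R]_k) (z : 'I_k -> R[i]) : \bar R :=
  if pselect (Cstar z) then HTstar T z
  else ereal_inf [set ereal_sup [set HTstar T w | w in
                     [set w | Cstar w /\ forall j, cabs (w j - z j) < r]]
                 | r in [set r : R | 0 < r]].

(* S_J: points t in R^|J| whose extension by zero (s_{j_k} = t_k, s_j = 0 off J,
   with j_1 < ... < j_l the increasing enumeration of J) lies in S *)
Definition SJ (n : nat) (S : set 'rV[R]_n) (J : {set 'I_n}) : set 'rV[R]_#|J| :=
  [set t | exists s, S s /\ (forall k : 'I_#|J|, s ord0 (enum_val k) = t ord0 k)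
                         /\ (forall j, j \notin J -> s ord0 j = 0)].

End Defs.
Arguments SJ {R n} S J _.

(* Main.v *)
Require Import Defs.
From HB Require Import structures.
From mathcomp Require Import all_boot all_order all_algebra.
From mathcomp Require Import all_classical all_reals all_analysis.
From mathcomp Require Import complex.
From mathcomp Require Import ring lra.
Import Order.TTheory GRing.Theory Num.Theory.
Import numFieldNormedType.Exports.
Local Open Scope classical_set_scope.
Local Open Scope ring_scope.

Section Helpers.
Variable R : realType.

Lemma sum_cont (T : topologicalType) (I : finType) (P : pred I) (F : I -> T -> R) :
  (forall i, continuous (F i)) -> continuous (fun x => \sum_(i | P i) F i x).
Proof.
move=> Fc x.
suff H : forall r, (fun y => \sum_(i <- r | P i) F i y) @ x --> \sum_(i <- r | P i) F i x by apply: H.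
elim=> [|i r IH].
  under eq_fun do rewrite big_nil. rewrite big_nil. exact: cvg_cst.
under eq_fun do rewrite big_cons. rewrite big_cons.
case: (P i) => //. apply: cvgD => //. exact: Fc.
Qed.

Lemma lin_cont n (P : pred 'I_n) (c : 'I_n -> R) :
  continuous (fun s : 'rV[R]_n => \sum_(j | P j) s ord0 j * c j).
Proof.
apply: sum_cont => j s. have H := @coord_continuous R 1 n ord0 j s. exact: (@cvgMr_tmp R _ _ (nbhs_filter s) _ _ (c j) H).
Qed.

Lemma cont_bounded (T : topologicalType) (K : set T) (f : T -> R) :
  compact K -> continuous f -> exists M, forall s, K s -> f s <= M.
Proof.
move=> cK fc.
have cf : compact (f @` K).
  apply: continuous_compact => //. by apply: continuous_subspaceT.
have [M [_ HM]] := compact_bounded cf.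
exists (M + 1) => s Ks. 
have lt1 : M < M + 1 by rewrite ltrDl.
have := HM (M + 1) lt1 (f s) (ex_intro2 _ _ s Ks erefl).
by move/(le_trans (ler_norm _)).
Qed.


Lemma pos_lb (T : topologicalType) (K : set T) (g : T -> R) :
  compact K -> continuous g -> (forall s, K s -> 0 < g s) ->
  exists2 eta, 0 < eta & forall s, K s -> eta <= g s.
Proof.
move=> cK gc gpos.
have cg : compact (g @` K).
  apply: continuous_compact => //. by apply: continuous_subspaceT.
have clg : closed (g @` K) by apply: compact_closed => //; exact: norm_hausdorff.
have op : open (~` (g @` K)) by rewrite openC.
have /nbhs_ballP [e e0 He] : nbhs (0:R) (~` (g @` K)).
  apply: open_nbhs_nbhs; split => //.
  by move=> [s Ks gs0]; move: (gpos s Ks); rewrite gs0 ltxx.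
exists e => // s Ks; rewrite leNgt; apply/negP => lt.
apply: (He (g s)); last by exists s.
rewrite /ball /= sub0r normrN ger0_norm //. exact: ltW (gpos s Ks).
Qed.


Lemma cabs_ge0 (z : R[i]) : 0 <= Normc.normc z.
Proof. by case: z => x y /=; rewrite sqrtr_ge0. Qed.

Lemma cabs_gt0 (z : R[i]) : z != 0 -> 0 < Normc.normc z.
Proof.
move=> z0; rewrite lt_def cabs_ge0 andbT; apply/eqP => /Normc.eq0_normc.
by apply/eqP.
Qed.

Lemma cabs_real (x : R) : Normc.normc (x%:C)%C = `|x|.
Proof. by rewrite /= expr0n /= addr0 sqrtr_sqr. Qed.

Lemma cabs_tri (w a : R[i]) : Normc.normc w <= Normc.normc a + Normc.normc (w - a).
Proof. by have := le_normcD a (w - a); rewrite addrC subrK. Qed.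

Lemma HT_star k (T : set 'rV[R]_k) z : Cstar z -> HT T z = HTstar T z.
Proof. by move=> hz; rewrite /HT; case: pselect. Qed.

Lemma HT_nstar k (T : set 'rV[R]_k) z : ~ Cstar z -> HT T z =
  ereal_inf [set ereal_sup [set HTstar T w | w in
                     [set w | Cstar w /\ forall j, cabs (w j - z j) < r]]
                 | r in [set r : R | 0 < r]].
Proof. by move=> hz; rewrite /HT; case: pselect. Qed.

End Helpers.
Arguments cont_bounded {R T K f}.
Arguments lin_cont {R n}.
Arguments cabs_gt0 {R}.
Arguments cabs_ge0 {R}.
Arguments cabs_tri {R}.
Arguments cabs_real {R}.

Theorem proposition3p3 (R : realType) (n : nat) (S : set 'rV[R]_n)
  (S_compact : compact S)
  (S_convex : convex_set (S : set (convex_lmodType 'rV[R]_n)))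
  (S0 : S 0)
  (S_pos : forall s, S s -> forall i, 0 <= s ord0 i)
  (a : 'I_n -> R[i])
  (a_notstar : ~ Cstar a)
  (a_neq0 : exists j, a j != 0) :
  HT S a = HT (SJ S [set j : 'I_n | a j != 0]%SET) (fun k => a (enum_val k)).
Proof.
set J := [set j : 'I_n | a j != 0]%SET.
set b := (fun k => a (enum_val k)).
have bstar : Cstar b.
  by move=> k; have := enum_valP k; rewrite inE.
have -> : HT (SJ S J) b = HTstar (SJ S J) b.
  exact: HT_star.
rewrite HT_nstar //.
have sumJ : forall s : 'rV[R]_n,
    \sum_(i < #|J|) s ord0 (enum_val i) * ln (cabs (b i))
    = \sum_(j | a j != 0) s ord0 j * ln (cabs (a j)).
  move=> s; rewrite -(big_enum_val (fun j => s ord0 j * ln (cabs (a j)))).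
  by apply: eq_bigl => j; rewrite inE.
have lb : (HTstar (SJ S J) b <= ereal_inf [set ereal_sup [set HTstar S w | w in
                     [set w | Cstar w /\ forall j, (cabs (w j - a j) < r)%R]]
                 | r in [set r : R | (0 < r)%R]])%E.
  apply: le_ereal_inf_tmp => _ [r r0 <-].
  apply: ge_ereal_sup => _ [t [s [Ss [st s0]]] <-].
  pose w := fun j => if a j != 0 then a j else ((r / 2)%:C)%C.
  have r20 : 0 < r / 2 by rewrite divr_gt0.
  have wstar : Cstar w.
    move=> j; rewrite /w; case: ifP => // _.
    apply/negP => /eqP/(congr1 (@Normc.normc R)); rewrite cabs_real Normc.normc0.
    by move/eqP; rewrite normr_eq0 gt_eqF.
  have wnear : forall j, cabs (w j - a j) < r.
    move=> j; rewrite /w; case: ifP => [_|/negbFE/eqP ->].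
      by rewrite subrr /cabs Normc.normc0.
    rewrite subr0 /cabs cabs_real gtr0_norm //.
    by rewrite ltr_pdivrMr // ltr_pMr // ltr1n.
  apply: le_ereal_sup_tmp; exists (HTstar S w); first by exists w.
  apply: le_ereal_sup_tmp; exists ((\sum_(j < n) s ord0 j * ln (cabs (w j)))%:E).
    by exists s.
  rewrite lee_fin (bigID (fun j => a j != 0)) /= [X in _ <= _ + X]big1 ?addr0; last first.
    move=> j aj; rewrite s0 ?mul0r //; by rewrite inE.
  under eq_bigr do rewrite -st.
  rewrite sumJ le_eqVlt; apply/orP; left; apply/eqP.
  by apply: eq_bigr => j aj; rewrite /w aj.
have ub : forall c e, (HTstar (SJ S J) b < c%:E)%E -> 0 < e ->
   (ereal_inf [set ereal_sup [set HTstar S w | w in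
                     [set w | Cstar w /\ forall j, (cabs (w j - a j) < r)%R]]
                 | r in [set r : R | (0 < r)%R]] <= (c + e)%:E)%E.
  move=> c e Lc e0.
  pose f := fun s : 'rV[R]_n => \sum_(j | a j != 0) s ord0 j * ln (cabs (a j)).
  pose g := fun s : 'rV[R]_n => \sum_(j | ~~ (a j != 0)) s ord0 j * 1.
  have fS : forall s, S s -> (forall j, ~~ (a j != 0) -> s ord0 j = 0) -> f s < c.
    move=> s Ss s0.
    have fL : ((f s)%:E <= HTstar (SJ S J) b)%E.
      apply: le_ereal_sup_tmp; exists (f s)%:E => //.
      exists (\row_k s ord0 (enum_val k)).
        exists s; split => //; split; first by move=> k; rewrite mxE.
        by move=> j; rewrite inE => /s0.
      by congr (_%:E); rewrite /f -sumJ; apply: eq_bigr => k _; rewrite mxE.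
    by rewrite -lte_fin; exact: le_lt_trans fL Lc.
  pose K := S `&` (f @^-1` [set x | c <= x]).
  have cK : compact K.
    apply: compact_closedI => //; apply: preimage_closed; last exact: closed_ge.
    by move=> x _; apply: lin_cont.
  have [eta eta0 Heta] : exists2 eta, 0 < eta & forall s, K s -> eta <= g s.
    apply: pos_lb => //; first exact: lin_cont.
    move=> s [Ss /= cf]; rewrite lt_def; apply/andP; split; last first.
      by apply: sumr_ge0 => j _; rewrite mulr1 S_pos.
    apply/eqP => g0.
    have s0 : forall j, ~~ (a j != 0) -> s ord0 j = 0.
      move=> j aj; rewrite -[s ord0 j]mulr1; move: j aj; apply/psumr_eq0P => //.
      by move=> j _; rewrite mulr1 S_pos.
    by move: (fS s Ss s0); rewrite ltNge cf.
  have [B HB] := cont_bounded S_compact (lin_cont predT (fun=> 1)).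
  have [F HF] := cont_bounded S_compact (lin_cont (fun j => a j != 0) (fun j => ln (cabs (a j)))).
  pose Q := \sum_(j | a j != 0) (cabs (a j))^-1.
  have Q0 : 0 <= Q by apply: sumr_ge0 => j _; rewrite invr_ge0 cabs_ge0.
  pose delta := e / (`|B| + 1).
  have delta0 : 0 < delta by rewrite divr_gt0 // ltr_wpDl.
  pose M := (`|F| + e + `|c|) / eta.
  have M0 : 0 <= M.
    apply: divr_ge0; last exact: ltW. by rewrite !addr_ge0 // ltW.
  pose r := Order.min (expR (- M)) (delta / (Q + 1)).
  have r0 : 0 < r by rewrite lt_min expR_gt0 divr_gt0 // ltr_wpDl.
  apply: ge_ereal_inf; eexists; first by exists r.
  apply: ge_ereal_sup => _ [w [wstar wnear] <-].
  apply: ge_ereal_sup => _ [s Ss <-]; rewrite lee_fin.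
  rewrite (bigID (fun j => a j != 0)) /=.
  have part1 : \sum_(i < n | a i != 0) s ord0 i * ln (cabs (w i)) <= f s + e.
    apply: (@le_trans _ _ (\sum_(i < n | a i != 0)
        (s ord0 i * ln (cabs (a i)) + s ord0 i * delta))).
      apply: ler_sum => j aj; rewrite -mulrDr; apply: ler_wpM2l; first exact: S_pos.
      have x0 : 0 < cabs (a j) := cabs_gt0 _ aj.
      have y0 : 0 < cabs (w j) := cabs_gt0 _ (wstar j).
      have hl : ln (cabs (w j)) - ln (cabs (a j)) <= cabs (w j) / cabs (a j) - 1.
        rewrite -ln_div ?posrE //.
        have := @le_ln1Dx R (cabs (w j) / cabs (a j) - 1); rewrite [1 + _]addrC subrK; apply.
        have : 0 < cabs (w j) / cabs (a j) by rewrite divr_gt0.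
        move=> ?; lra.
      have hy : cabs (w j) <= cabs (a j) + r.
        apply: (le_trans (cabs_tri (w j) (a j))); rewrite lerD2l; exact: ltW (wnear j).
      have hq : (cabs (a j))^-1 <= Q.
        rewrite /Q (bigD1 j) //= lerDl; apply: sumr_ge0 => i _.
        by rewrite invr_ge0 cabs_ge0.
      have hr : r * (Q + 1) <= delta.
        rewrite -ler_pdivlMr; last by rewrite ltr_wpDl.
        by rewrite /r ge_min lexx orbT.
      have h1 : cabs (w j) / cabs (a j) - 1 = (cabs (w j) - cabs (a j)) * (cabs (a j))^-1.
        by rewrite mulrBl divff // gt_eqF.
      have h2 : (cabs (w j) - cabs (a j)) * (cabs (a j))^-1 <= r * (cabs (a j))^-1.
        apply: ler_wpM2r; first by rewrite invr_ge0 ltW.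
        lra.
      have h3 : r * (cabs (a j))^-1 <= r * Q by apply: ler_wpM2l => //; exact: ltW.
      rewrite mulrDr mulr1 in hr.
      lra.
    rewrite big_split /= lerD2l.
    have hsum : \sum_(i < n | a i != 0) s ord0 i * delta <=
                (\sum_(i < n | predT i) s ord0 i * 1) * delta.
      rewrite big_distrl (bigID (fun i => a i != 0) predT) /=.
      under [X in _ <= X + _]eq_bigr do rewrite mulr1.
      rewrite lerDl; apply: sumr_ge0 => i _.
      by rewrite mulr1 mulr_ge0 // ?S_pos // ltW.
    apply: (le_trans hsum).
    have hB := HB s Ss.
    have hB' : \sum_(i < n | predT i) s ord0 i * 1 <= `|B| + 1.
      apply: (le_trans hB); apply: (le_trans (ler_norm B)); by rewrite lerDl.
    apply: (le_trans (ler_wpM2r (ltW delta0) hB')).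
    by rewrite /delta mulrC divfK // gt_eqF // ltr_wpDl.
  have part2 : \sum_(i < n | ~~ (a i != 0)) s ord0 i * ln (cabs (w i)) <= - (M * g s).
    rewrite /g mulr_sumr -sumrN; apply: ler_sum => j aj.
    have -> : - (M * (s ord0 j * 1)) = s ord0 j * (- M) by rewrite mulr1 mulrN mulrC.
    apply: ler_wpM2l; first exact: S_pos.
    have aj0 : a j = 0 by move: aj; rewrite negbK => /eqP.
    have hw := wnear j; rewrite aj0 subr0 in hw.
    have hr2 : r <= expR (- M) by rewrite /r ge_min lexx.
    have hw2 : cabs (w j) < expR (- M) := lt_le_trans hw hr2.
    have px : cabs (w j) \in Num.pos by rewrite posrE cabs_gt0 // wstar.
    have pe : expR (- M) \in Num.pos by rewrite posrE expR_gt0.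
    rewrite -(ltr_ln px pe) expRK in hw2.
    exact: ltW.
  have gs0 : 0 <= g s by apply: sumr_ge0 => j _; rewrite mulr1 S_pos.
  have Mg0 : 0 <= M * g s by rewrite mulr_ge0.
  have [cf|fc] := leP c (f s).
    have hg : eta <= g s := Heta s (conj Ss cf).
    have hM : M * eta = `|F| + e + `|c| by rewrite /M divfK // gt_eqF.
    have hMg : M * eta <= M * g s := ler_wpM2l M0 hg.
    have hF : f s <= F := HF s Ss.
    have hF2 := ler_norm F.
    have hc : - c <= `|c| by rewrite -normrN ler_norm.
    lra.
  lra.
move: (ereal_inf _) (HTstar (SJ S J) b) lb ub => X L lb ub.
apply/eqP; rewrite eq_le lb andbT.
case: L lb ub => [l| |] lb ub.
- apply/lee_addgt0Pr => e e0.
  have e20 : 0 < e / 2 by rewrite divr_gt0.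
  have := ub (l + e / 2) (e / 2); rewrite -addrA -splitr; apply => //.
  by rewrite lte_fin ltrDl.
- exact: leey.
- have H : forall c, (X <= c%:E)%E.
    move=> c; have := ub (c - 1) 1; rewrite subrK; apply => //; exact: ltNyr.
  case: X H {lb ub} => [x| |] H //.
  + have := H (x - 1); rewrite lee_fin => ?; exfalso; lra.
  + by have := H 0.
Qed.
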